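(* Let $Q$ be an operator circuit, let $x$ be an input string, and let $T_Q(G,M)$ be the tensor circuit constructed from $Q$ and $x$ as described in the context. Then the value of $T_Q(G,M)$ equals $\|Q(x)_0\|^2$.
   Context: Let $A=\mathbb{C}^2$ with orthonormal basis $|0\rangle,|1\rangle$. Operator circuits: an operator circuit $Q$ has $n$ input qubits and $m$ output qubits, one of which is marked as the answer qubit. Its gates are arbitrary linear maps $g:A^{\otimes k}\to A^{\otimes\ell}$. For $x\in\{0,1\}^n$, $Q(x)_0$ is the projection of $Q(x)$ onto the subspace in which the answer qubit is $|0\rangle$. Adjoint gate: for a gate $g$, its adjoint $g^*$ is the linear map determined by $\langle y|g^*z\rangle=\langle gy|z\rangle$. The circuit $Q'$: first apply $Q$; then apply to the answer qubit a one-qubit gate that projects onto $|0\rangle$; then apply the circuit $Q$ flipped upside down, with every gate $g$ replaced by $g^*$. So $Q'$ maps $n$ qubits to $n$ qubits. Tensor circuits: for a finite graph $G$, a labeling is a map $l:E(G)\to\{0,1\}$. For a vertex $v$, let $G_v$ be the star of $v$, i.e. the subgraph consisting of $v$, its incident edges and their endpoints. A tensor at $v$ is a map $m_v$ from labelings of the edges of $G_v$ to $\mathbb{C}$. A tensor circuit $(G,M)$ is a graph $G$ with a tensor $m_v$ at every vertex. Its value is $$\sum_{l:E(G)\to\{0,1\}}\ \prod_{v\in V(G)} m_v(l|_{E(G_v)}).$$ For a set $E$ of edges and a labeling $l$, $\alpha^{l(E)}$ denotes the basis vector $\bigotimes_{e\in E}|l(e)\rangle$ of $A^{\otimes E}$.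 Construction of $T_Q(G,M)$: $G$ is the graph of $Q'$. It has one vertex for each gate of $Q'$ (including the projection gate), one degree-1 vertex for each of the $n$ input qubits, one degree-1 vertex for each of the $n$ output qubits, and one edge for each wire. The tensors are as follows. - For a vertex $v$ of a gate $g$ with input-wire edges $E_1$ and output-wire edges $E_2$: $m_v(l)$ is the coefficient of $\alpha^{l(E_2)}$ in $g(\alpha^{l(E_1)})$. - For the vertex of the projection gate, whose two edges carry labels $a,b$: $m_v(0,0)=1$, and $m_v(a,b)=0$ otherwise. - For the vertex of the $i$-th input qubit and for the vertex of the $i$-th output qubit of $Q'$: $m_v(x_i)=1$ and $m_v(1-x_i)=0$. *)

(* Defs.v *)
From mathcomp Require Import all_boot all_order all_algebra.
Set Implicit Arguments. Unset Strict Implicit. Unset Printing Implicit Defensive.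
Import Order.TTheory GRing.Theory Num.Theory.
Local Open Scope ring_scope.

(* Scalars: C is any numClosedFieldType (the complex numbers are one), with  *)
(* complex conjugation z^* .  A qubit A = C^2 has basis |false> = |0>,       *)
(* |true> = |1>.  A basis vector of A^{(x) k} is a bit sequence of length k.  *)

(* An operator circuit, given as a wire diagram.
   - [wire] : the finite set of wires;
   - input qubit i is carried by wire [in_wire i], output qubit j by
     wire [out_wire j]; [answer] is the marked answer qubit;
   - the gates are numbered 0 .. n_gates-1 in the order of application;
     gate j reads the wires [gate_in j] (in this order, i.e. its k tensor
     factors) and produces the wires [gate_out j];
   - the gate j is the linear map g_j : A^{(x)k} -> A^{(x)l} determined by
     g_j (alpha^a) = \sum_b gate_coef j a b alpha^b
     (a of length k = size (gate_in j), b of length l = size (gate_out j));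
     this is an arbitrary linear map. *)
Record opcircuit (C : numClosedFieldType) := OpCircuit {
  wire : finType;
  n_in : nat;
  n_out : nat;
  n_gates : nat;
  in_wire : 'I_n_in -> wire;
  out_wire : 'I_n_out -> wire;
  answer : 'I_n_out;
  gate_in : 'I_n_gates -> seq wire;
  gate_out : 'I_n_gates -> seq wire;
  gate_coef : 'I_n_gates -> seq bool -> seq bool -> C }.

Arguments in_wire {C} _ _.
Arguments out_wire {C} _ _.
Arguments answer {C} _.
Arguments gate_in {C} _ _.
Arguments gate_out {C} _ _.
Arguments gate_coef {C} _ _ _ _.

Definition wf_circuit (C : numClosedFieldType) (Q : opcircuit C) : Prop :=
  [/\ forall e : wire Q,
        (#|[pred i | in_wire Q i == e]| + \sum_(j < n_gates Q) count_mem e (gate_out Q j))%N = 1%N,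
      forall e : wire Q,
        (#|[pred o | out_wire Q o == e]| + \sum_(j < n_gates Q) count_mem e (gate_in Q j))%N = 1%N
    & forall (e : wire Q) (j j' : 'I_(n_gates Q)),
        e \in gate_out Q j -> e \in gate_in Q j' -> (j < j')%N].

(* A state of the register of currently live wires is represented as a
   function of a labeling of all wires (it depends only on the live ones). *)
Definition labeling (C : numClosedFieldType) (Q : opcircuit C) :=
  {ffun wire Q -> bool}.

Definition relabel (W : finType) (l : {ffun W -> bool}) (s : seq W) (a : seq bool)
  : {ffun W -> bool} :=
  [ffun e => if e \in s then nth false a (index e s) else l e].

Definition init_state (C : numClosedFieldType) (Q : opcircuit C)
  (x : 'I_(n_in Q) -> bool) : labeling Q -> C :=
  fun l => if [forall i, l (in_wire Q i) == x i] then 1 else 0.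

Definition apply_gate (C : numClosedFieldType) (Q : opcircuit C)
  (j : 'I_(n_gates Q)) (psi : labeling Q -> C) : labeling Q -> C :=
  fun l => \sum_(a : (size (gate_in Q j)).-tuple bool)
     gate_coef Q j a [seq l e | e <- gate_out Q j] * psi (relabel l (gate_in Q j) a).

Definition run (C : numClosedFieldType) (Q : opcircuit C)
  (x : 'I_(n_in Q) -> bool) : labeling Q -> C :=
  foldl (fun psi j => apply_gate j psi) (init_state x) (enum 'I_(n_gates Q)).

(* Q(x), as a vector of A^{(x) m}: coordinate at basis vector y *)
Definition circ_out (C : numClosedFieldType) (Q : opcircuit C)
  (x : 'I_(n_in Q) -> bool) (y : {ffun 'I_(n_out Q) -> bool}) : C :=
  run x [ffun e => [exists o, (out_wire Q o == e) && y o]].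

(* Q(x)_0 : projection onto answer qubit = |0> *)
Definition circ_out0 (C : numClosedFieldType) (Q : opcircuit C)
  (x : 'I_(n_in Q) -> bool) (y : {ffun 'I_(n_out Q) -> bool}) : C :=
  if y (answer Q) then 0 else circ_out x y.

Definition norm2 (C : numClosedFieldType) (m : nat)
  (v : {ffun 'I_m -> bool} -> C) : C :=
  \sum_(y : {ffun 'I_m -> bool}) `|v y| ^+ 2.

(* A tensor circuit: a finite graph given by its vertices, edges and, for
   each vertex v, the list of edges of its star G_v (in a fixed order); the
   tensor m_v is a map from labelings of E(G_v), i.e. from the labels of the
   star edges listed in that order, to C. *)
Record tensor_circuit (C : numClosedFieldType) := TensorCircuit {
  tc_vertex : finType;
  tc_edge : finType;
  tc_star : tc_vertex -> seq tc_edge;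
  tc_tensor : tc_vertex -> seq bool -> C }.

Definition tc_value (C : numClosedFieldType) (T : tensor_circuit C) : C :=
  \sum_(l : {ffun tc_edge T -> bool})
     \prod_(v : tc_vertex T) tc_tensor v [seq l e | e <- tc_star v].

(* Q' = Q ; projection |0><0| on the answer qubit ; Q flipped with adjoints.
   Wires of Q': every wire e of Q (left copy, [inl e]) together with a mirror
   copy [inr e] of every wire e of Q that is not a non-answer output wire of
   Q (a non-answer output wire of Q flows directly into the flipped circuit,
   so it is a single wire of Q'). *)
Definition mirrored (C : numClosedFieldType) (Q : opcircuit C) (e : wire Q) : bool :=
  [forall o, (out_wire Q o == e) ==> (o == answer Q)].

Definition TQ_edge (C : numClosedFieldType) (Q : opcircuit C) : finType :=
  (wire Q + {e : wire Q | mirrored e})%type.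

Definition mir (C : numClosedFieldType) (Q : opcircuit C) (e : wire Q) : TQ_edge Q :=
  match insub e with Some e' => inr e' | None => inl e end.

(* vertices: n input vertices, n output vertices (of Q'), the gates of Q,
   the projection gate, the adjoint gates of the flipped Q *)
Definition TQ_vertex (C : numClosedFieldType) (Q : opcircuit C) : finType :=
  ('I_(n_in Q) + 'I_(n_in Q) + ('I_(n_gates Q) + unit + 'I_(n_gates Q)))%type.

Definition TQ_star (C : numClosedFieldType) (Q : opcircuit C)
  (v : TQ_vertex Q) : seq (TQ_edge Q) :=
  match v with
  | inl (inl i) => [:: inl (in_wire Q i)]
  | inl (inr i) => [:: @mir C Q (in_wire Q i)]
  | inr (inl (inl j)) => map inl (gate_in Q j) ++ map inl (gate_out Q j)
  | inr (inl (inr tt)) => [:: inl (out_wire Q (answer Q)); @mir C Q (out_wire Q (answer Q))]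
  | inr (inr j) => map (@mir C Q) (gate_out Q j) ++ map (@mir C Q) (gate_in Q j)
  end.

(* For a gate g with input edges E1 and output edges E2 (listed in
   this order in the star), m_v(l) = coefficient of alpha^{l(E2)} in
   g(alpha^{l(E1)}).  The adjoint g_j^* : A^{(x)l} -> A^{(x)k} of gate j has
   coefficient of alpha^c in g_j^*(alpha^b) equal to
   <alpha^c | g_j^* alpha^b> = <g_j alpha^c | alpha^b> = (gate_coef j c b)^*. *)
Definition TQ_tensor (C : numClosedFieldType) (Q : opcircuit C)
  (x : 'I_(n_in Q) -> bool) (v : TQ_vertex Q) (s : seq bool) : C :=
  match v with
  | inl (inl i) => if s == [:: x i] then 1 else 0
  | inl (inr i) => if s == [:: x i] then 1 else 0
  | inr (inl (inl j)) =>
      let k := size (gate_in Q j) in gate_coef Q j (take k s) (drop k s)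
  | inr (inl (inr tt)) => if s == [:: false; false] then 1 else 0
  | inr (inr j) =>
      let k := size (gate_out Q j) in (gate_coef Q j (drop k s) (take k s))^*
  end.

Definition TQ (C : numClosedFieldType) (Q : opcircuit C) (x : 'I_(n_in Q) -> bool)
  : tensor_circuit C :=
  @TensorCircuit C (TQ_vertex Q) (TQ_edge Q) (@TQ_star C Q) (TQ_tensor x).

(* Main.v *)
Require Import Defs.
From mathcomp Require Import all_boot all_order all_algebra zify ring.
Set Implicit Arguments. Unset Strict Implicit. Unset Printing Implicit Defensive.
Import GRing.Theory Num.Theory.
Local Open Scope ring_scope.

Section Run.
Variables (C : numClosedFieldType) (Q : opcircuit C) (x : 'I_(n_in Q) -> bool).
Hypothesis wfQ : wf_circuit Q.

Lemma count_in_le e j : (count_mem e (gate_in Q j) <= 1)%N.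
Proof. case: wfQ => _ H _; move: (H e); rewrite (bigD1 j) //=; lia. Qed.

Lemma in_uniq j : uniq (gate_in Q j).
Proof.
apply: count_mem_uniq => e; have := count_in_le e j.
case: (boolP (e \in gate_in Q j)) => He.
  move=> Hle; apply/eqP; rewrite eqn_leq Hle /=; move: He; rewrite -has_pred1 has_count => ->.
  by [].
by move/count_memPn: He => ->.
Qed.

Lemma in_disj j j' e : j != j' -> e \in gate_in Q j -> e \in gate_in Q j' -> False.
Proof.
move=> nj H1 H2; case: wfQ => _ H _; move: (H e); rewrite (bigD1 j) //= (bigD1 j') 1?eq_sym //=.
move: H1 H2; rewrite -!has_pred1 !has_count.
move: (count_mem e (gate_in Q j)) (count_mem e (gate_in Q j')) (#|_|) (\sum_(_ < _ | _) _) => a b c d; lia.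
Qed.

Lemma out_in j j' e : e \in gate_out Q j -> e \in gate_in Q j' -> (j < j')%N.
Proof. by case: wfQ => _ _ H; apply: H. Qed.

Definition Is (s : seq 'I_(n_gates Q)) (e : wire Q) := has (fun j => e \in gate_in Q j) s.

Definition Gs (s : seq 'I_(n_gates Q)) (L : {ffun wire Q -> bool}) : C :=
  init_state x L * \prod_(j <- s) gate_coef Q j [seq L e | e <- gate_in Q j] [seq L e | e <- gate_out Q j].

Definition Sum_s s (l : labeling Q) : C :=
  \sum_(L : {ffun wire Q -> bool} | [forall e, ~~ Is s e ==> (L e == l e)]) Gs s L.

Lemma sorted_rcons_inv (s : seq 'I_(n_gates Q)) j :
  sorted (fun a b : 'I_(n_gates Q) => (a < b)%N) (rcons s j) ->
  sorted (fun a b : 'I_(n_gates Q) => (a < b)%N) s /\ all (fun a : 'I_(n_gates Q) => (a < j)%N) s.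
Proof.
rewrite -rev_sorted rev_rcons /= path_sortedE; last first.
  by move=> a b c /= H1 H2; apply: ltn_trans H2 H1.
by rewrite rev_sorted all_rev => /andP[].
Qed.

Lemma map_nth_index (T : eqType) (s : seq T) (a : seq bool) :
  uniq s -> size a = size s -> [seq nth false a (index e s) | e <- s] = a.
Proof.
elim: s a => [|y s IH] [|b a] //= /andP[ys us] [sz].
rewrite eqxx /=; congr (_ :: _); rewrite -[RHS](IH a us sz).
apply/eq_in_map => e es /=; case: eqP => // eq; by move: ys; rewrite eq es.
Qed.

Lemma keyP (s : seq 'I_(n_gates Q)) j l (a : (size (gate_in Q j)).-tuple bool) L :
  (forall e, e \in gate_in Q j -> ~~ Is s e) ->
  [forall e, ~~ Is s e ==> (L e == relabel l (gate_in Q j) a e)] =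
  [forall e, ~~ Is (rcons s j) e ==> (L e == l e)] &&
  (a == map_tuple L (in_tuple (gate_in Q j))).
Proof.
move=> Hd; apply/idP/idP.
  move/forallP => H; apply/andP; split.
    apply/forallP => e; apply/implyP; rewrite /Is has_rcons negb_or => /andP[He1 He2].
    by have := implyP (H e) He2; rewrite /relabel ffunE (negbTE He1).
  apply/eqP; apply: val_inj => /=;
  rewrite -[LHS](map_nth_index (in_uniq j)) ?size_tuple //.
  apply/eq_in_map => e He; have := implyP (H e) (Hd e He).
  by rewrite /relabel ffunE He => /eqP.
move/andP=> [/forallP H1 /eqP Ha]; apply/forallP => e; apply/implyP => He.
rewrite /relabel ffunE; case: ifP => Hin.
  by rewrite Ha /= (nth_map e) ?index_mem // nth_index.
by apply: (implyP (H1 e)); rewrite /Is has_rcons Hin.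
Qed.

Lemma run_gen s l : sorted (fun a b : 'I_(n_gates Q) => (a < b)%N) s ->
  foldl (fun psi j => apply_gate j psi) (init_state x) s l = Sum_s s l.
Proof.
elim/last_ind: s l => [|s j IH] l.
  move=> _ /=; rewrite /Sum_s (big_pred1 l) /Gs ?big_nil ?mulr1 // => L /=.
  apply/forallP/eqP => [H|->//]; apply/ffunP => e; exact/eqP/H.
move=> /sorted_rcons_inv [Hs Hall].
rewrite foldl_rcons /apply_gate.
under eq_bigr do rewrite IH //.
have Hd : forall e, e \in gate_in Q j -> ~~ Is s e.
  move=> e He; apply/hasPn => j' Hj' /=; apply/negP => He'.
  apply: (@in_disj j j' e) => //; apply/negP => /eqP Ejj.
  by move: Hall => /allP /(_ j' Hj'); rewrite Ejj ltnn.
have Ho : forall e L, e \in gate_out Q j -> [forall e, ~~ Is (rcons s j) e ==> (L e == l e)] -> L e = l e.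
  move=> e L He /forallP H; apply/eqP/(implyP (H e)); apply/hasPn => j' Hj' /=.
  apply/negP => He'; have := out_in He He'.
  move: Hj'; rewrite mem_rcons inE => /orP[/eqP->|Hj']; first by rewrite ltnn.
  by move: Hall => /allP /(_ j' Hj') /= H1 H2; move: (ltn_trans H1 H2); rewrite ltnn.
rewrite /Sum_s.
under eq_bigr do rewrite big_distrr /= big_mkcond /=.
rewrite exchange_big /= [RHS]big_mkcond /=; apply: eq_bigr => L _.
under eq_bigr do rewrite keyP //.
case: ifP => HP.
  rewrite /= -big_mkcond /= (big_pred1 (map_tuple L (in_tuple (gate_in Q j)))) //.
  rewrite /Gs -cats1 big_cat big_seq1 /= mulrCA [X in _ = _ * X]mulrC; congr (_ * (_ * _)).
  by congr (gate_coef _ _ _); apply/eq_in_map => e He; rewrite (Ho e L He HP).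
by apply: big1 => a _; rewrite /=.
Qed.
Lemma card_out_le e : (#|[pred o | out_wire Q o == e]| <= 1)%N.
Proof. case: wfQ => _ H _; have := H e; lia. Qed.

Lemma out_inj : injective (out_wire Q).
Proof.
move=> o1 o2 E; apply/eqP; apply/negPn/negP => ne.
have := card_out_le (out_wire Q o1).
have : ([set o1; o2] \subset [pred o | out_wire Q o == out_wire Q o1]).
  by apply/subsetP => o; rewrite !inE => /orP[]/eqP->; rewrite ?E.
by move/subset_leq_card; rewrite cards2 ne; move: (#|_|) => a; lia.
Qed.

Definition Fall (L : {ffun wire Q -> bool}) := Gs (enum 'I_(n_gates Q)) L.

Lemma notIs_ex e : ~~ Is (enum 'I_(n_gates Q)) e = [exists o, out_wire Q o == e].
Proof.
have E1 : ~~ Is (enum 'I_(n_gates Q)) e = (\sum_(j < n_gates Q) count_mem e (gate_in Q j) == 0)%N.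
  rewrite sum_nat_eq0; apply/hasPn/forallP => [Hh j|Hh j _] /=.
    by apply/eqP/count_memPn; apply: Hh; rewrite mem_enum.
  by apply/count_memPn/eqP; apply: Hh.
rewrite E1; case: wfQ => _ H _; have := H e.
move: (\sum_(_ < _) _) => b Hc; apply/eqP/existsP.
  move=> Hb; have : ~~ pred0b [pred o | out_wire Q o == e].
    by rewrite /pred0b; move: Hc; rewrite Hb; move: (#|_|) => a; lia.
  by move/pred0Pn => [o Ho]; exists o.
move=> [o Ho]; have : (0 < #|[pred o | out_wire Q o == e]|)%N by apply/card_gt0P; exists o.
by move: Hc; move: (#|_|) => a; lia.
Qed.

Lemma outP e : reflect (exists o, out_wire Q o = e) (~~ Is (enum 'I_(n_gates Q)) e).
Proof.
rewrite notIs_ex; apply: (iffP existsP) => -[o Ho]; exists o; exact/eqP.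
Qed.

Lemma sorted_enum : sorted (fun a b : 'I_(n_gates Q) => (a < b)%N) (enum 'I_(n_gates Q)).
Proof. by have := iota_ltn_sorted 0 (n_gates Q); rewrite -val_enum_ord sorted_map. Qed.

Lemma run_formula l : run x l =
  \sum_(L : {ffun wire Q -> bool} | [forall o, L (out_wire Q o) == l (out_wire Q o)]) Fall L.
Proof.
rewrite /run run_gen ?sorted_enum // /Sum_s; apply: eq_bigl => L.
apply/forallP/forallP => H.
  move=> o; apply: (implyP (H (out_wire Q o))); apply/outP; by exists o.
move=> e; apply/implyP => /outP [o <-]; exact: H.
Qed.

Lemma circ_out_formula y : circ_out x y =
  \sum_(L : {ffun wire Q -> bool} | [forall o, L (out_wire Q o) == y o]) Fall L.
Proof.
rewrite /circ_out run_formula; apply: eq_bigl => L; apply: eq_forallb => o.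
rewrite ffunE; congr (_ == _); apply/existsP/idP => [[o' /andP[/eqP/out_inj -> //]]|Hy].
by exists o; rewrite eqxx.
Qed.

Definition Ay (L : {ffun wire Q -> bool}) (y : {ffun 'I_(n_out Q) -> bool}) :=
  [forall o, L (out_wire Q o) == y o].

Lemma sq_y y : `|circ_out0 x y| ^+ 2 =
  \sum_(L : {ffun wire Q -> bool}) \sum_(L' : {ffun wire Q -> bool})
     (if ~~ y (answer Q) && Ay L y && Ay L' y then Fall L * (Fall L')^* else 0).
Proof.
rewrite /circ_out0; case: ifP => Hy /=.
  by rewrite normr0 expr0n /=; symmetry; apply: big1 => L _; apply: big1.
rewrite normCK circ_out_formula rmorph_sum big_distrl /= big_mkcond /=.
apply: eq_bigr => L _; rewrite /Ay; case: ifP => HL /=.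
  by rewrite big_distrr /= big_mkcond /=; apply: eq_bigr => L' _; case: ifP.
by symmetry; apply: big1 => L' _.
Qed.

Lemma norm_side : norm2 (circ_out0 x) =
  \sum_(L : {ffun wire Q -> bool}) \sum_(L' : {ffun wire Q -> bool})
    (if [forall o, L (out_wire Q o) == L' (out_wire Q o)] && ~~ L (out_wire Q (answer Q))
     then Fall L * (Fall L')^* else 0).
Proof.
rewrite /norm2; under eq_bigr do rewrite sq_y.
rewrite exchange_big /=; apply: eq_bigr => L _.
rewrite exchange_big /=; apply: eq_bigr => L' _.
rewrite -big_mkcond /=.
pose y0 := [ffun o => L (out_wire Q o)].
case: ifP => Hc.
  rewrite (big_pred1 y0) // => y /=; move: Hc => /andP[/forallP Hc Ha].
  apply/idP/eqP.
    move=> /andP[/andP[_ /forallP H1] _]; apply/ffunP => o; rewrite ffunE; exact/esym/eqP/H1.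
  move=> ->; rewrite /y0 ffunE Ha /=; apply/andP; split; apply/forallP => o; rewrite ffunE //.
  by rewrite (eqP (Hc o)).
apply: big1 => y /andP[/andP[Hy /forallP H1] /forallP H2]; exfalso; move: Hc.
rewrite (eqP (H1 (answer Q))) Hy andbT => /negP; apply; apply/forallP => o.
by rewrite (eqP (H1 o)) (eqP (H2 o)).
Qed.

Lemma prod_ind (I : finType) (b : I -> bool) :
  \prod_(i : I) (if b i then 1 else 0 : C) = if [forall i, b i] then 1 else 0.
Proof.
case: ifP => [/forallP H|/forallP H]; first by apply: big1 => i _; rewrite H.
have [i Hi] : exists i, ~~ b i.
  by apply/existsP; rewrite -negb_forall; apply/negP => /forallP.
by rewrite (bigD1 i) //= (negbTE Hi) mul0r.
Qed.

Definition L1 (l : {ffun TQ_edge Q -> bool}) : {ffun wire Q -> bool} := [ffun e => l (inl e)].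
Definition L2 (l : {ffun TQ_edge Q -> bool}) : {ffun wire Q -> bool} := [ffun e => l (mir e)].

Lemma conjM (a b : C) : (a * b)^* = a^* * b^*.
Proof. exact: rmorphM. Qed.

Lemma conjP (I : finType) (P : pred I) (F : I -> C) : (\prod_(i in P) F i)^* = \prod_(i in P) (F i)^*.
Proof. exact: rmorph_prod. Qed.

Lemma init_conj L : (init_state x L)^* = init_state x L.
Proof. by rewrite /init_state; case: ifP; rewrite ?conjC1 ?conjC0. Qed.

Lemma prod_vertex (l : {ffun TQ_edge Q -> bool}) :
  \prod_(v : TQ_vertex Q) TQ_tensor x v [seq l e | e <- TQ_star v] =
  if ~~ L1 l (out_wire Q (answer Q)) && ~~ L2 l (out_wire Q (answer Q))
  then Fall (L1 l) * (Fall (L2 l))^* else 0.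
Proof.
rewrite !big_sumType /=.
have -> : \prod_(i : 'I_(n_in Q)) (if [:: l (inl (in_wire Q i))] == [:: x i] then 1 else 0 : C)
   = init_state x (L1 l).
  rewrite /init_state; under eq_bigr do rewrite eqseq_cons andbT.
  by rewrite prod_ind; congr (if _ then _ else _); apply: eq_forallb => i; rewrite ffunE.
have -> : \prod_(i : 'I_(n_in Q)) (if [:: l (mir (in_wire Q i))] == [:: x i] then 1 else 0 : C)
   = init_state x (L2 l).
  rewrite /init_state; under eq_bigr do rewrite eqseq_cons andbT.
  by rewrite prod_ind; congr (if _ then _ else _); apply: eq_forallb => i; rewrite ffunE.
have m1 : forall s, [seq l e | e <- [seq inl i | i <- s]] = [seq L1 l e | e <- s].
  by move=> s; rewrite -map_comp; apply: eq_map => e; rewrite /= ffunE.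
have m2 : forall s, [seq l e | e <- [seq mir i | i <- s]] = [seq L2 l e | e <- s].
  by move=> s; rewrite -map_comp; apply: eq_map => e; rewrite /= ffunE.
under eq_bigr do rewrite map_cat !m1 take_size_cat ?size_map // drop_size_cat ?size_map //.
under [X in _ * (_ * X)]eq_bigr do rewrite map_cat !m2 take_size_cat ?size_map // drop_size_cat ?size_map //.
rewrite (big_pred1 tt); last by case.
rewrite /= !eqseq_cons andbT /L1 /L2 !ffunE.
rewrite /Fall /Gs !big_enum /= conjM init_conj conjP.
have E : forall F : 'I_(n_gates Q) -> C, \prod_(i in 'I_(n_gates Q)) F i = \prod_(i < n_gates Q) F i.
  by move=> F; apply: eq_bigl.
do 4?rewrite E.
case: (l (inl _)); case: (l (mir _)); rewrite /= ?(mulr0, mul0r) //.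
all: ring.
Qed.

Definition agreeM (p : {ffun wire Q -> bool} * {ffun wire Q -> bool}) :=
  [forall e, ~~ mirrored e ==> (p.1 e == p.2 e)].

Definition psi (p : {ffun wire Q -> bool} * {ffun wire Q -> bool}) : {ffun TQ_edge Q -> bool} :=
  [ffun ed : TQ_edge Q => match ed with inl e => p.1 e | inr u => p.2 (val u) end].

Lemma psi_mir p e : psi p (mir e) = if mirrored e then p.2 e else p.1 e.
Proof.
rewrite /mir; case: insubP => [u He Eu|Hn] /=; rewrite ffunE /=; first by rewrite He Eu.
by rewrite (negbTE Hn).
Qed.

Lemma mir_val (u : {e : wire Q | mirrored e}) : @mir C Q (val u) = inr u.
Proof. by rewrite /mir valK. Qed.

Lemma mir_nm e : ~~ mirrored e -> @mir C Q e = inl e.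
Proof. by move=> H; rewrite /mir insubN. Qed.

Lemma tensor_side : tc_value (TQ x) =
  \sum_(L : {ffun wire Q -> bool}) \sum_(L' : {ffun wire Q -> bool})
    (if agreeM (L, L') && (~~ L (out_wire Q (answer Q)) && ~~ L' (out_wire Q (answer Q)))
     then Fall L * (Fall L')^* else 0).
Proof.
rewrite /tc_value /=; under eq_bigr do rewrite prod_vertex.
symmetry; rewrite pair_big /=.
pose H (p : {ffun wire Q -> bool} * {ffun wire Q -> bool}) :=
  if ~~ p.1 (out_wire Q (answer Q)) && ~~ p.2 (out_wire Q (answer Q))
  then Fall p.1 * (Fall p.2)^* else 0.
transitivity (\sum_(p | agreeM p) H p).
  rewrite [RHS]big_mkcond; apply: eq_bigr => -[a b] _ /=.
  by rewrite /H /=; case: (agreeM _).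
rewrite (reindex_onto (fun l => (L1 l, L2 l)) psi).
  apply: eq_big => l; last by [].
  apply/andP; split.
    apply/forallP => e /=; apply/implyP => Hm; rewrite !ffunE mir_nm //.
  apply/eqP/ffunP => -[e|u]; rewrite !ffunE //=.
  by rewrite (mir_val u).
move=> [a b] Hp; congr pair; apply/ffunP => e; first by rewrite /L1 !ffunE.
rewrite /L2 ffunE psi_mir /=; case: ifP => Hm //.
by move/forallP: Hp => /(_ e); rewrite Hm /= => /eqP.
Qed.

Lemma pred_match (L L' : {ffun wire Q -> bool}) :
  agreeM (L, L') && (~~ L (out_wire Q (answer Q)) && ~~ L' (out_wire Q (answer Q))) =
  [forall o, L (out_wire Q o) == L' (out_wire Q o)] && ~~ L (out_wire Q (answer Q)).
Proof.
apply/idP/idP.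
  move=> /andP[/forallP Ha /andP[H1 H2]]; rewrite H1 andbT; apply/forallP => o.
  case: (eqVneq o (answer Q)) => [->|ne]; first by rewrite (negbTE H1) (negbTE H2).
  apply: (implyP (Ha (out_wire Q o))); rewrite /mirrored negb_forall; apply/existsP.
  by exists o; rewrite eqxx /=.
move=> /andP[/forallP Ho H1]; rewrite H1 -(eqP (Ho (answer Q))) H1 /= andbT.
apply/forallP => e /=; apply/implyP; rewrite /mirrored negb_forall => /existsP [o].
by rewrite negb_imply => /andP[/eqP <- _]; apply: Ho.
Qed.

End Run.

Unset Implicit Arguments.
Theorem lemma4 (C : numClosedFieldType) (Q : opcircuit C)
  (x : 'I_(n_in Q) -> bool) :
  @wf_circuit C Q ->
  tc_value (@TQ C Q x) = norm2 (@circ_out0 C Q x).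
Proof.
move=> wfQ; rewrite tensor_side (norm_side x wfQ).
by apply: eq_bigr => L _; apply: eq_bigr => L' _; rewrite pred_match.
Qed.
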